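(* Let $K\subset Y$ and $K_h\subset Y_h$ be non-empty, convex and closed sets, where $Y_h\subset Y$ is a finite-dimensional subspace (not necessarily $K_h\subset K$). Let $\overline{y}\in H_Y$, $\varrho>0$, let $y_\varrho\in K$ solve $\langle y_\varrho,y-y_\varrho\rangle_{H_Y}+\varrho\langle Dy_\varrho,y-y_\varrho\rangle_{Y^*,Y}\ge\langle\overline{y},y-y_\varrho\rangle_{H_Y}$ for all $y\in K$, and let $y_{\varrho h}\in K_h$ solve $\langle y_{\varrho h},y_h-y_{\varrho h}\rangle_{H_Y}+\varrho\langle Dy_{\varrho h},y_h-y_{\varrho h}\rangle_{Y^*,Y}\ge\langle\overline{y},y_h-y_{\varrho h}\rangle_{H_Y}$ for all $y_h\in K_h$. Assume $\varrho Dy_\varrho+y_\varrho-\overline{y}\in H_Y$. Then $$\|y_\varrho-y_{\varrho h}\|_{H_Y}^2+2\varrho\|y_\varrho-y_{\varrho h}\|_D^2\le 2\inf_{y_h\in K_h}\Big[3\|y_\varrho-y_h\|_{H_Y}^2+\varrho\|y_\varrho-y_h\|_D^2\Big]+4\|\varrho Dy_\varrho+y_\varrho-\overline{y}\|_{H_Y}^2.$$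
   Context: Abstract setting: Let $Y\subset H_Y\subset Y^*$ be a Gelfand triple of real Hilbert spaces, with duality pairing $\langle\cdot,\cdot\rangle_{Y^*,Y}$ extending the inner product of $H_Y$. Let $D:Y\to Y^*$ be bounded, linear, self-adjoint and elliptic, $\|y\|_D:=\langle Dy,y\rangle_{Y^*,Y}^{1/2}$ (an equivalent norm on $Y$). An element $g\in Y^*$ is said to belong to $H_Y$ if there is $w\in H_Y$ with $\langle g,v\rangle_{Y^*,Y}=\langle w,v\rangle_{H_Y}$ for all $v\in Y$, and then $\|g\|_{H_Y}:=\|w\|_{H_Y}$. *)

(* Defs.v *)
From HB Require Import structures.
From mathcomp Require Import all_boot all_order all_algebra.
From mathcomp Require Import classical_sets boolp reals.
Set Implicit Arguments. Unset Strict Implicit. Unset Printing Implicit Defensive.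
Import Order.TTheory GRing.Theory Num.Theory.
Local Open Scope ring_scope.
Local Open Scope classical_set_scope.

Section Defs.
Variable R : realType.

Record inner_product (V : lmodType R) (ip : V -> V -> R) : Prop := {
  ip_sym : forall x y, ip x y = ip y x;
  ip_linear : forall (a : R) x y z, ip (a *: x + y) z = a * ip x z + ip y z;
  ip_ge0 : forall x, 0 <= ip x x;
  ip_def : forall x, ip x x = 0 -> x = 0 }.

Definition ipnorm (V : lmodType R) (ip : V -> V -> R) (x : V) : R :=
  Num.sqrt (ip x x).

Definition ip_complete (V : lmodType R) (ip : V -> V -> R) : Prop :=
  forall u : nat -> V,
    (forall e : R, 0 < e -> exists N : nat, forall m n : nat,
        (N <= m)%N -> (N <= n)%N -> ipnorm ip (u m - u n) < e) ->
    exists l : V, forall e : R, 0 < e -> exists N : nat, forall n : nat,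
        (N <= n)%N -> ipnorm ip (u n - l) < e.

Definition hilbert (V : lmodType R) (ip : V -> V -> R) : Prop :=
  inner_product ip /\ ip_complete ip.

(* Gelfand triple Y ⊂ H ⊂ Y^*: Y, H Hilbert spaces, iota : Y -> H a
   continuous, injective, linear embedding with dense range.  The dual
   pairing <g, v>_{Y*,Y} for g in H is (g, iota v)_H. *)
Definition gelfand_triple (Y H : lmodType R) (ipY : Y -> Y -> R)
    (ipH : H -> H -> R) (iota : Y -> H) : Prop :=
  [/\ hilbert ipY /\ hilbert ipH,
      (forall (a : R) x y, iota (a *: x + y) = a *: iota x + iota y),
      injective iota,
      (exists C : R, forall y, ipnorm ipH (iota y) <= C * ipnorm ipY y) &
      (forall (h : H) (e : R), 0 < e -> exists y : Y, ipnorm ipH (iota y - h) < e)].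

(* D : Y -> Y^* encoded by its pairing D y v = <D y, v>_{Y*,Y}:
   bounded, linear, self-adjoint and elliptic. *)
Definition elliptic_op (Y : lmodType R) (ipY : Y -> Y -> R) (D : Y -> Y -> R) : Prop :=
  [/\ (forall (a : R) x y v, D (a *: x + y) v = a * D x v + D y v),
      (forall (a : R) y v w, D y (a *: v + w) = a * D y v + D y w),
      (forall y v, D y v = D v y),
      (exists C : R, forall y v, `|D y v| <= C * ipnorm ipY y * ipnorm ipY v) &
      (exists c : R, 0 < c /\ forall y, c * ipY y y <= D y y)].

Definition Dnorm (Y : lmodType R) (D : Y -> Y -> R) (y : Y) : R := Num.sqrt (D y y).

Definition convex_set (V : lmodType R) (A : set V) : Prop :=
  forall x y (t : R), A x -> A y -> 0 <= t <= 1 -> A (t *: x + (1 - t) *: y).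

Definition ip_closed (V : lmodType R) (ip : V -> V -> R) (A : set V) : Prop :=
  forall x, (forall e : R, 0 < e -> exists2 a, A a & ipnorm ip (x - a) < e) -> A x.

Definition fin_dim_subspace (V : lmodType R) (S : set V) : Prop :=
  exists (n : nat) (b : 'I_n -> V),
    S = [set y | exists c : 'I_n -> R, y = \sum_(i < n) c i *: b i].

End Defs.

(* Main.v *)
Require Import Defs.
From HB Require Import structures.
From mathcomp Require Import all_boot all_order all_algebra.
From mathcomp Require Import classical_sets boolp reals.
From mathcomp Require Import lra.
Import Order.TTheory GRing.Theory Num.Theory.
Local Open Scope ring_scope.
Local Open Scope classical_set_scope.

Section Aux.
Variable R : realType.
Variable V : lmodType R.
Variable ip : V -> V -> R.
Hypothesis hip : inner_product ip.

Lemma ipDl x y z : ip (x + y) z = ip x z + ip y z.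
Proof. by have := ip_linear hip 1 x y z; rewrite scale1r mul1r. Qed.
Lemma ip0l z : ip 0 z = 0.
Proof.
have := ip_linear hip 1 0 0 z; rewrite scale1r addr0 mul1r => h.
by apply/eqP; rewrite -(subrr (ip 0 z)) {2}h addrK.
Qed.
Lemma ipZl a x z : ip (a *: x) z = a * ip x z.
Proof. by rewrite -(addr0 (a *: x)) (ip_linear hip) ip0l addr0. Qed.
Lemma ipBl x y z : ip (x - y) z = ip x z - ip y z.
Proof. by rewrite ipDl -scaleN1r ipZl mulN1r. Qed.
Lemma ipDr x y z : ip z (x + y) = ip z x + ip z y.
Proof. by rewrite (ip_sym hip) ipDl !(ip_sym hip z). Qed.
Lemma ipZr a x z : ip z (a *: x) = a * ip z x.
Proof. by rewrite (ip_sym hip) ipZl (ip_sym hip z). Qed.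
Lemma ipBr x y z : ip z (x - y) = ip z x - ip z y.
Proof. by rewrite (ip_sym hip) ipBl !(ip_sym hip z). Qed.
Lemma ipnorm2 x : ipnorm ip x ^+ 2 = ip x x.
Proof. by rewrite /ipnorm sqr_sqrtr // (ip_ge0 hip). Qed.
End Aux.
Arguments ipDl {R V ip}. Arguments ipBl {R V ip}. Arguments ipZl {R V ip}.
Arguments ipDr {R V ip}. Arguments ipBr {R V ip}. Arguments ipZr {R V ip}.
Arguments ipnorm2 {R V ip}.

Theorem mainTheorem9 (R : realType) (Y H : lmodType R)
  (ipY : Y -> Y -> R) (ipH : H -> H -> R) (iota : Y -> H) (D : Y -> Y -> R)
  (hG : gelfand_triple ipY ipH iota) (hD : elliptic_op ipY D)
  (K Kh Yh : set Y)
  (hK0 : K !=set0) (hKc : convex_set K) (hKcl : ip_closed ipY K)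
  (hYh : fin_dim_subspace Yh) (hKhYh : Kh `<=` Yh)
  (hKh0 : Kh !=set0) (hKhc : convex_set Kh) (hKhcl : ip_closed ipY Kh)
  (ybar : H) (rho : R) (hrho : 0 < rho)
  (yr yrh : Y) (hyrK : K yr) (hyrhK : Kh yrh)
  (hVI : forall y, K y ->
     ipH (iota yr) (iota (y - yr)) + rho * D yr (y - yr)
       >= ipH ybar (iota (y - yr)))
  (hVIh : forall yh, Kh yh ->
     ipH (iota yrh) (iota (yh - yrh)) + rho * D yrh (yh - yrh)
       >= ipH ybar (iota (yh - yrh)))
  (w : H)
  (hw : forall v : Y,
     rho * D yr v + ipH (iota yr) (iota v) - ipH ybar (iota v) = ipH w (iota v)) :
  ipnorm ipH (iota (yr - yrh)) ^+ 2 + 2 * rho * Dnorm D (yr - yrh) ^+ 2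
  <= 2 * inf [set 3 * ipnorm ipH (iota (yr - yh)) ^+ 2 + rho * Dnorm D (yr - yh) ^+ 2
              | yh in Kh]
     + 4 * ipnorm ipH w ^+ 2.
Proof.
case: hG => [[[hY _] [hH _]] hiota _ _ _].
case: hD => [Dl Dr Ds _ [c [c0 hc]]].
have iotaB x y : iota (x - y) = iota x - iota y.
  by rewrite addrC -scaleN1r hiota scaleN1r addrC.
have DBl x y v : D (x - y) v = D x v - D y v.
  by rewrite addrC -scaleN1r Dl mulN1r addrC.
have DBr x y v : D v (x - y) = D v x - D v y.
  by rewrite addrC -scaleN1r Dr mulN1r addrC.
have Dge0 y : 0 <= D y y.
  apply: le_trans (hc y); apply: mulr_ge0; [exact: ltW | exact: (ip_ge0 hY)].
have Dp a b : 0 <= D a a - 2 * D a b + D b b.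
  have := Dge0 (a - b); rewrite DBl !DBr (Ds b a); lra.
have Dn2 y : Dnorm D y ^+ 2 = D y y by rewrite /Dnorm sqr_sqrtr.
rewrite !(ipnorm2 hH) Dn2.
suff key : forall yh, Kh yh ->
  ipH (iota (yr - yrh)) (iota (yr - yrh)) + 2 * rho * D (yr - yrh) (yr - yrh)
  <= 2 * (3 * ipH (iota (yr - yh)) (iota (yr - yh)) + rho * D (yr - yh) (yr - yh))
       + 4 * ipH w w.
  have ne : [set 3 * ipnorm ipH (iota (yr - yh)) ^+ 2 + rho * Dnorm D (yr - yh) ^+ 2
              | yh in Kh] !=set0.
    by case: hKh0 => y hy; exists (3 * ipnorm ipH (iota (yr - y)) ^+ 2 + rho * Dnorm D (yr - y) ^+ 2), y.
  have : (ipH (iota (yr - yrh)) (iota (yr - yrh)) + 2 * rho * D (yr - yrh) (yr - yrh)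
           - 4 * ipH w w) / 2 <= inf [set 3 * ipnorm ipH (iota (yr - yh)) ^+ 2 + rho * Dnorm D (yr - yh) ^+ 2
              | yh in Kh].
    apply: lb_le_inf => // _ [yh hyh <-].
    rewrite !(ipnorm2 hH) Dn2 ler_pdivrMr //.
    have := key yh hyh; lra.
  lra.
move=> yh hyh.
have hv : yh - yrh = (yr - yrh) - (yr - yh).
  by rewrite opprB [RHS]addrC addrA subrK.
have h1 := hVIh yh hyh.
have h2 := hw (yh - yrh).
rewrite hv (iotaB (yr - yrh)) (ipBr hH) (ipBr hH (iota (yr - yrh))) in h1 h2.
rewrite (DBr (yr - yrh) (yr - yh)) in h1 h2.
rewrite (DBr (yr - yrh) (yr - yh) yr) (ipBr hH _ _ w) in h2.
have kI Z : ipH (iota yr) Z - ipH (iota yrh) Z = ipH (iota (yr - yrh)) Z.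
  by rewrite iotaB (ipBl hH).
have kD v : D yr v - D yrh v = D (yr - yrh) v by rewrite DBl.
have kI1 := kI (iota (yr - yrh)).
have kI2 := kI (iota (yr - yh)).
have kD1 := kD (yr - yrh).
have kD2 := kD (yr - yh).
have keyI : ipH (iota (yr - yrh)) (iota (yr - yrh)) + rho * D (yr - yrh) (yr - yrh)
   <= ipH (iota (yr - yrh)) (iota (yr - yh)) + rho * D (yr - yrh) (yr - yh)
      + ipH w (iota (yr - yrh)) - ipH w (iota (yr - yh)).
  rewrite -kI1 -kI2 -kD1 -kD2 !mulrBr; rewrite !mulrBr (ipBr hH _ _ (iota yr)) in h1 h2; lra.
move: keyI (Dp (yr - yrh) (yr - yh)).
move: (iota (yr - yrh)) (iota (yr - yh)) => E F.
have ipNl x z : ipH (- x) z = - ipH x z by rewrite -scaleN1r (ipZl hH) mulN1r.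
have ipNr x z : ipH z (- x) = - ipH z x by rewrite -scaleN1r (ipZr hH) mulN1r.
have X := ip_ge0 hH (E - (2/3) *: F - (2/3) *: w).
have Z := ip_ge0 hH (F + (1/7) *: w).
rewrite !(ipDl hH, ipDr hH, ipNl, ipNr, ipZl hH, ipZr hH) in X Z.
have s1 := ip_sym hH E F. have s2 := ip_sym hH E w. have s3 := ip_sym hH F w.
move=> keyI p1.
have rD : 2 * (rho * D (yr - yrh) (yr - yh)) <=
   rho * D (yr - yrh) (yr - yrh) + rho * D (yr - yh) (yr - yh) by nra.
rewrite -mulrA.
have Q := ip_ge0 hH w. lra.
Qed.
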